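(* Let $\Gamma\curvearrowright X, I$ be a dynamical ideal. If it has cofinal orbits, then Player II has a winning strategy in the DC game.
   Context: A dynamical ideal $\Gamma\curvearrowright X, I$: a group $\Gamma$ acting on a set $X$ and an ideal $I$ on $X$ containing all singletons and invariant under the action ($\gamma\cdot a=\{\gamma\cdot x:x\in a\}\in I$ for $a\in I$). For $a\subseteq X$, $\mathrm{pstab}(a)=\{\gamma\in\Gamma:\gamma\cdot x=x\ \forall x\in a\}$. For $a,b\in I$, $b$ is $a$-large if for every $c\in I$ there is $\gamma\in\mathrm{pstab}(a)$ with $c\subseteq\gamma\cdot b$; the dynamical ideal has cofinal orbits if every $a\in I$ has an $a$-large $b\in I$. The DC game: players I and II alternate for $\omega$ rounds; at round $n$ Player I plays $a_n\in I$ and Player II answers with $\gamma_n\in\Gamma$, subject to $\gamma_0=1$ and $\gamma_n$ fixes every element of $\bigcup_{m<n}\gamma_m\cdot a_m$. Player II wins if $\bigcup_n\gamma_n\cdot a_n\in I$. *)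

(* Defs.v *)
From Stdlib Require Import List.
Import ListNotations.
Set Implicit Arguments.

Definition subset {X : Type} (a b : X -> Prop) : Prop := forall x, a x -> b x.

Definition is_group {G : Type} (mul : G -> G -> G) (one : G) (inv : G -> G) : Prop :=
  (forall g h k, mul g (mul h k) = mul (mul g h) k) /\
  (forall g, mul one g = g) /\ (forall g, mul g one = g) /\
  (forall g, mul (inv g) g = one) /\ (forall g, mul g (inv g) = one).

Definition is_action {G X : Type} (mul : G -> G -> G) (one : G) (act : G -> X -> X) : Prop :=
  (forall x, act one x = x) /\ (forall g h x, act (mul g h) x = act g (act h x)).

Definition img {G X : Type} (act : G -> X -> X) (g : G) (a : X -> Prop) : X -> Prop :=
  fun y => exists x, a x /\ y = act g x.

Definition is_ideal {X : Type} (I : (X -> Prop) -> Prop) : Prop :=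
  I (fun _ => False) /\
  (forall a b, subset a b -> I b -> I a) /\
  (forall a b, I a -> I b -> I (fun x => a x \/ b x)) /\
  ~ I (fun _ => True).

Definition dynamical_ideal {G X : Type} (mul : G -> G -> G) (one : G) (inv : G -> G)
  (act : G -> X -> X) (I : (X -> Prop) -> Prop) : Prop :=
  is_group mul one inv /\ is_action mul one act /\ is_ideal I /\
  (forall x : X, I (fun y => y = x)) /\
  (forall g a, I a -> I (img act g a)).

Definition pstab {G X : Type} (act : G -> X -> X) (a : X -> Prop) (g : G) : Prop :=
  forall x, a x -> act g x = x.

Definition large {G X : Type} (act : G -> X -> X) (I : (X -> Prop) -> Prop)
  (a b : X -> Prop) : Prop :=
  forall c, I c -> exists g, pstab act a g /\ subset c (img act g b).

Definition cofinal_orbits {G X : Type} (act : G -> X -> X) (I : (X -> Prop) -> Prop) : Prop :=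
  forall a, I a -> exists b, I b /\ large act I a b.

(* A strategy for Player II: given Player I's moves a_0,...,a_n (in order),
   answer gamma_n.  (Player II's own earlier moves are determined by the
   strategy, so they need not be passed.) *)
Definition strategyII (G X : Type) := list (X -> Prop) -> G.

Definition history {X : Type} (a : nat -> X -> Prop) (n : nat) : list (X -> Prop) :=
  map a (seq 0 (S n)).

Definition winningII {G X : Type} (one : G) (act : G -> X -> X)
  (I : (X -> Prop) -> Prop) (sigma : strategyII G X) : Prop :=
  forall a : nat -> X -> Prop, (forall n, I (a n)) ->
    let gam := fun n => sigma (history a n) in
    gam 0 = one /\
    (forall n, pstab act (fun x => exists m, m < n /\ img act (gam m) (a m) x) (gam n)) /\
    I (fun x => exists n, img act (gam n) (a n) x).

(* Main.v *)
Require Import Defs.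
From Stdlib Require Import List Arith Lia ClassicalEpsilon.
Import ListNotations.

Section Proof.
Variables (G X : Type) (mul : G -> G -> G) (one : G) (inv : G -> G)
  (act : G -> X -> X) (I : (X -> Prop) -> Prop).
Hypothesis Hd : dynamical_ideal mul one inv act I.
Hypothesis Hc : cofinal_orbits act I.

Definition emp : X -> Prop := fun _ => False.
Definition uni (a b : X -> Prop) : X -> Prop := fun x => a x \/ b x.

Definition Lb (a : X -> Prop) : X -> Prop :=
  epsilon (inhabits emp) (fun b => I b /\ large act I a b).
Definition Lg (U r c : X -> Prop) : G :=
  epsilon (inhabits one) (fun g => pstab act U g /\ subset c (img act g r)).

Definition eta (U r : X -> Prop) : G := Lg U r (uni r (Lb (uni U r))).
Definition r1 (U r : X -> Prop) := img act (inv (eta U r)) r.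
Definition mv (U r c : X -> Prop) : G := inv (Lg U (r1 U r) c).
Definition step (U r c : X -> Prop) : (X -> Prop) * (X -> Prop) :=
  (uni U (img act (mv U r c) c), img act (inv (eta U r)) (Lb (uni U r))).

Fixpoint st (a : nat -> X -> Prop) (n : nat) : (X -> Prop) * (X -> Prop) :=
  match n with
  | 0 => (a 0, Lb (a 0))
  | S n => step (fst (st a n)) (snd (st a n)) (a (S n))
  end.

Definition gamF (a : nat -> X -> Prop) (n : nat) : G :=
  match n with
  | 0 => one
  | S n => mv (fst (st a n)) (snd (st a n)) (a (S n))
  end.

Lemma st_ext a a' n : (forall i, i <= n -> a i = a' i) -> st a n = st a' n.
Proof.
  induction n as [|n IH]; intros H; simpl.
  - rewrite (H 0) by lia; reflexivity.
  - rewrite IH by (intros; apply H; lia). rewrite (H (S n)) by lia; reflexivity.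
Qed.

Lemma gamF_ext a a' n : (forall i, i <= n -> a i = a' i) -> gamF a n = gamF a' n.
Proof.
  destruct n as [|n]; intros H; simpl; [reflexivity|].
  rewrite (st_ext a a' n) by (intros; apply H; lia).
  rewrite (H (S n)) by lia; reflexivity.
Qed.

Definition sigma : strategyII G X :=
  fun l => gamF (fun i => nth i l emp) (pred (length l)).

Lemma nth_hist a n i : i <= n -> nth i (history a n) emp = a i.
Proof.
  intros Hi. unfold history.
  rewrite nth_indep with (d' := a 0).
  - rewrite map_nth. rewrite seq_nth by lia. reflexivity.
  - rewrite length_map, length_seq. lia.
Qed.

Lemma sigma_hist a n : sigma (history a n) = gamF a n.
Proof.
  unfold sigma. unfold history at 2. rewrite length_map, length_seq. simpl.
  apply gamF_ext. intros; apply nth_hist; auto.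
Qed.

Lemma act_inv_l g x : act (inv g) (act g x) = x.
Proof.
  destruct Hd as [[_ [_ [_ [Hl _]]]] [[H1 HM] _]].
  rewrite <- HM, Hl, H1. reflexivity.
Qed.
Lemma act_inv_r g x : act g (act (inv g) x) = x.
Proof.
  destruct Hd as [[_ [_ [_ [_ Hr]]]] [[H1 HM] _]].
  rewrite <- HM, Hr, H1. reflexivity.
Qed.
Lemma act_mul g h x : act (mul g h) x = act g (act h x).
Proof. destruct Hd as [_ [[_ HM] _]]. apply HM. Qed.

Lemma pstab_inv U g : pstab act U g -> pstab act U (inv g).
Proof.
  intros H x Hx. rewrite <- (H x Hx) at 1. apply act_inv_l.
Qed.

Lemma I_img g a : I a -> I (img act g a).
Proof. destruct Hd as [_ [_ [_ [_ H]]]]. apply H. Qed.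
Lemma I_sub a b : subset a b -> I b -> I a.
Proof. destruct Hd as [_ [_ [[_ [H _]] _]]]. apply H. Qed.
Lemma I_uni a b : I a -> I b -> I (uni a b).
Proof. destruct Hd as [_ [_ [[_ [_ [H _]]] _]]]. apply H. Qed.

Lemma Lb_spec a : I a -> I (Lb a) /\ large act I a (Lb a).
Proof.
  intros Ha. unfold Lb. apply epsilon_spec. apply Hc; auto.
Qed.
Lemma Lg_spec U r c : large act I U r -> I c ->
  pstab act U (Lg U r c) /\ subset c (img act (Lg U r c) r).
Proof.
  intros Hl Hcc. unfold Lg. apply epsilon_spec. apply Hl; auto.
Qed.

Lemma large_anti A A' b : large act I A b -> subset A' A -> large act I A' b.
Proof.
  intros H Hs c Hcc. destruct (H c Hcc) as [g [Hg Hs2]].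
  exists g; split; auto. intros x Hx; apply Hg, Hs, Hx.
Qed.

Lemma step_ok U r c S : subset U S -> subset r S -> I S -> large act I U r -> I c ->
  pstab act U (mv U r c) /\ subset (img act (mv U r c) c) (r1 U r) /\
  subset (r1 U r) r /\
  subset (snd (step U r c)) r /\
  large act I (uni U (r1 U r)) (snd (step U r c)).
Proof.
  intros HU Hr HS Hl Hcc.
  assert (IU : I U) by (eapply I_sub; eauto).
  assert (Ir : I r) by (eapply I_sub; eauto).
  assert (IUr : I (uni U r)) by (apply I_uni; auto).
  destruct (Lb_spec _ IUr) as [If Hf].
  assert (Irf : I (uni r (Lb (uni U r)))) by (apply I_uni; auto).
  destruct (Lg_spec U r _ Hl Irf) as [He Hsub].
  change (Lg U r (uni r (Lb (uni U r)))) with (eta U r) in He, Hsub.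
  unfold r1; unfold step; simpl.
  set (e := eta U r) in *.
  set (f := Lb (uni U r)) in *.
  assert (Hr1l : large act I U (r1 U r)).
  { intros d Hdd. destruct (Hl d Hdd) as [g [Hg Hs]].
    exists (mul g e). split.
    - intros x Hx. rewrite act_mul, (He x Hx), (Hg x Hx). reflexivity.
    - intros y Hy. destruct (Hs y Hy) as [x [Hx ->]].
      exists (act (inv e) x). split.
      + unfold r1. exists x; split; auto.
      + rewrite act_mul, act_inv_r. reflexivity. }
  assert (Ir1 : I (r1 U r)) by (apply I_img; auto).
  destruct (Lg_spec U (r1 U r) c Hr1l Hcc) as [Ht Hts].
  split; [|split; [|split; [|split]]].
  - unfold mv. apply pstab_inv. exact Ht.
  - intros y [x [Hx ->]]. destruct (Hts x Hx) as [z [Hz ->]].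
    unfold mv. rewrite act_inv_l. exact Hz.
  - intros y [x [Hx ->]]. destruct (Hsub x (or_introl Hx)) as [z [Hz ->]].
    fold e. rewrite act_inv_l. exact Hz.
  - intros y [x [Hx ->]]. simpl in *. destruct (Hsub x (or_intror Hx)) as [z [Hz ->]].
    fold e. rewrite act_inv_l. exact Hz.
  - intros d Hdd. simpl.
    destruct (Hf (img act e d) (I_img _ _ Hdd)) as [g [Hg Hs]].
    exists (mul (inv e) (mul g e)). split.
    + intros x [Hx | Hx].
      * rewrite !act_mul, (He x Hx). rewrite (Hg x (or_introl Hx)).
        apply (pstab_inv _ _ He x Hx).
      * destruct Hx as [z [Hz ->]]. fold e.
        rewrite !act_mul, act_inv_r, (Hg z (or_intror Hz)). reflexivity.
    + intros y Hy.
      destruct (Hs (act e y) (ex_intro _ y (conj Hy eq_refl))) as [z [Hz Hez]].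
      exists (act (inv e) z). split.
      * exists z; split; auto.
      * rewrite !act_mul, act_inv_r, <- Hez, act_inv_l. reflexivity.
Qed.

Definition Ugm (a : nat -> X -> Prop) (n : nat) : X -> Prop :=
  fun x => exists m, m < n /\ img act (gamF a m) (a m) x.

Lemma invariant a : (forall n, I (a n)) ->
  let Sb := uni (a 0) (Lb (a 0)) in
  forall n, subset (fst (st a n)) Sb /\ subset (snd (st a n)) Sb /\
    large act I (fst (st a n)) (snd (st a n)) /\
    subset (Ugm a (S n)) (fst (st a n)) /\
    pstab act (Ugm a n) (gamF a n).
Proof.
  intros Ha Sb.
  assert (IS : I Sb) by (apply I_uni; [apply Ha | apply Lb_spec, Ha]).
  induction n as [|n [HU [Hr [Hl [HUg Hp]]]]].
  - simpl. destruct (Lb_spec _ (Ha 0)) as [_ Hl].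
    split; [intros x Hx; left; exact Hx|].
    split; [intros x Hx; right; exact Hx|].
    split; [exact Hl|]. split.
    + intros x [m [Hm [y [Hy ->]]]]. assert (m = 0) by lia. subst m.
      simpl. destruct Hd as [_ [[H1 _] _]]. rewrite H1. exact Hy.
    + intros x [m [Hm _]]. lia.
  - destruct (step_ok _ _ (a (S n)) Sb HU Hr IS Hl (Ha (S n)))
      as [Hpm [Himg [Hr1 [Hr2 Hl2]]]].
    simpl. split; [|split; [|split; [|split]]].
    + intros x [Hx | Hx]; [apply HU; exact Hx|].
      apply Hr, Hr1, Himg, Hx.
    + intros x Hx. apply Hr, Hr2, Hx.
    + eapply large_anti; [exact Hl2|].
      intros x [Hx | Hx]; [left; exact Hx | right; apply Himg, Hx].
    + intros x [m [Hm Hx]].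
      destruct (Nat.eq_dec m (S n)) as [-> | Hne].
      * right. exact Hx.
      * left. apply HUg. exists m; split; [lia | exact Hx].
    + intros x Hx. apply Hpm. apply HUg. exact Hx.
Qed.

End Proof.

Theorem mainTheorem9 (G X : Type) (mul : G -> G -> G) (one : G) (inv : G -> G)
  (act : G -> X -> X) (I : (X -> Prop) -> Prop) :
  dynamical_ideal mul one inv act I ->
  cofinal_orbits act I ->
  exists sigma : strategyII G X, winningII one act I sigma.
Proof.
  intros Hd Hc. exists (sigma G X one inv act I).
  intros a Ha. simpl.
  pose proof (invariant G X mul one inv act I Hd Hc a Ha) as Inv. simpl in Inv.
  split; [|split].
  - rewrite sigma_hist. reflexivity.
  - intros n. rewrite sigma_hist.
    destruct (Inv n) as [_ [_ [_ [_ Hp]]]].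
    intros x Hx. apply Hp. destruct Hx as [m [Hm Hx]].
    exists m; split; auto. rewrite sigma_hist in Hx. exact Hx.
  - eapply (I_sub G X mul one inv act I Hd).
    2:{ apply (I_uni G X mul one inv act I Hd); [apply Ha|].
        apply (Lb_spec G X act I Hc), Ha. }
    intros x [n Hx]. rewrite sigma_hist in Hx.
    destruct (Inv n) as [HU [_ [_ [HUg _]]]].
    apply HU, HUg. exists n; split; [lia | exact Hx].
Qed.
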